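(* Let $L^\bullet_{\mathrm{cl}}$ be a classical generalized operator algebra with the extended Fredholm property. Let $N\in\mathbb N$ and $A_j\in L^0_{\mathrm{cl}}((g^j,g^{j+1}))$, $j=0,\dots,N$, be such that for each $\ell=1,\dots,n$ the sequence $0\to E_\ell(g^0)\xrightarrow{\sigma_\ell(A_0)}E_\ell(g^1)\to\cdots\xrightarrow{\sigma_\ell(A_N)}E_\ell(g^{N+1})\to0$ is an exact family of complexes. Then there exist $\tilde A_j\in L^0_{\mathrm{cl}}((g^j,g^{j+1}))$ with $\sigma(\tilde A_j)=\sigma(A_j)$ such that $0\to H(g^0)\xrightarrow{\tilde A_0}H(g^1)\to\cdots\xrightarrow{\tilde A_N}H(g^{N+1})\to0$ is a complex. If $A_{j+1}A_j$ is smoothing for every $j$, the $\tilde A_j$ can be chosen with $\tilde A_j-A_j$ smoothing for every $j$.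
   Context: Generalized operator algebra $L^\bullet$: a set $G$ of weights; to each $g\in G$ a Hilbert space $H(g)$; for each pair $(g^0,g^1)$ vector spaces $L^{-\infty}\subset L^0\subset\mathcal L(H(g^0),H(g^1))$ with compact smoothing operators, identities in $L^0((g,g))$, closed under composition (orders adding in $\{0,-\infty\}$) and Hilbert adjoints. Classical: there is a principal symbol map $A\mapsto\sigma(A)=(\sigma_1(A),\dots,\sigma_n(A))$, $\sigma_\ell(A):E_\ell(g^0)\to E_\ell(g^1)$ Hilbert bundle morphisms (for fixed $\ell$ all bundles over a common base), linear, multiplicative, $\sigma_\ell(A^* )=\sigma_\ell(A)^*$, zero on smoothing operators, and $A$ elliptic (all $\sigma_\ell(A)$ invertible) iff $A$ has a parametrix (inverse modulo smoothing operators). Extended Fredholm property: every $A\in L^0$ has a parametrix iff it is Fredholm, and every selfadjoint Fredholm $A\in L^0((g,g))$ has a parametrix $B$ with $AB=BA=1-\pi$, $\pi$ the orthogonal projection onto $\ker A$. A family of complexes is exact if it is exact in each fibre. *)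

(* Defs.v *)
From Stdlib Require Import Reals Arith.
Set Implicit Arguments.

Record Cplx := mkC { re : R; im : R }.
Definition C0 : Cplx := mkC 0%R 0%R.
Definition C1 : Cplx := mkC 1%R 0%R.
Definition Cadd (a b : Cplx) : Cplx := mkC (re a + re b)%R (im a + im b)%R.
Definition Cmul (a b : Cplx) : Cplx :=
  mkC (re a * re b - im a * im b)%R (re a * im b + im a * re b)%R.
Definition Cconj (a : Cplx) : Cplx := mkC (re a) (- im a)%R.

Record Hilbert := {
  hV :> Type;
  hzero : hV;
  hadd : hV -> hV -> hV;
  hopp : hV -> hV;
  hscal : Cplx -> hV -> hV;
  hinner : hV -> hV -> Cplx;  (* linear in the first argument *)
  hadd_assoc : forall x y z, hadd x (hadd y z) = hadd (hadd x y) z;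
  hadd_comm : forall x y, hadd x y = hadd y x;
  hadd_0 : forall x, hadd hzero x = x;
  hadd_opp : forall x, hadd (hopp x) x = hzero;
  hscal_1 : forall x, hscal C1 x = x;
  hscal_mul : forall a b x, hscal a (hscal b x) = hscal (Cmul a b) x;
  hscal_addv : forall a x y, hscal a (hadd x y) = hadd (hscal a x) (hscal a y);
  hscal_adds : forall a b x, hscal (Cadd a b) x = hadd (hscal a x) (hscal b x);
  hinner_add : forall x y z, hinner (hadd x y) z = Cadd (hinner x z) (hinner y z);
  hinner_scal : forall a x z, hinner (hscal a x) z = Cmul a (hinner x z);
  hinner_conj : forall x y, hinner x y = Cconj (hinner y x);
  hinner_pos : forall x, (0 <= re (hinner x x))%R;
  hinner_def : forall x, hinner x x = C0 -> x = hzero;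
  hcomplete : forall u : nat -> hV,
    (forall eps, (0 < eps)%R -> exists N, forall m k, (N <= m)%nat -> (N <= k)%nat ->
        (sqrt (re (hinner (hadd (u m) (hopp (u k))) (hadd (u m) (hopp (u k))))) < eps)%R) ->
    exists l, forall eps, (0 < eps)%R -> exists N, forall m, (N <= m)%nat ->
        (sqrt (re (hinner (hadd (u m) (hopp l)) (hadd (u m) (hopp l)))) < eps)%R
}.

Arguments hzero {h}.
Arguments hadd {h}.
Arguments hopp {h}.
Arguments hscal {h}.
Arguments hinner {h}.

Definition hnorm {V : Hilbert} (x : V) : R := sqrt (re (hinner x x)).
Definition hdist {V : Hilbert} (x y : V) : R := hnorm (hadd x (hopp y)).

Definition converges {V : Hilbert} (u : nat -> V) (l : V) : Prop :=
  forall eps, (0 < eps)%R -> exists N, forall m, (N <= m)%nat -> (hdist (u m) l < eps)%R.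

Definition linear_op {V W : Hilbert} (f : V -> W) : Prop :=
  (forall x y, f (hadd x y) = hadd (f x) (f y)) /\
  (forall a x, f (hscal a x) = hscal a (f x)).

Definition bounded_op {V W : Hilbert} (f : V -> W) : Prop :=
  linear_op f /\ exists M, forall x, (hnorm (f x) <= M * hnorm x)%R.

Definition compact_op {V W : Hilbert} (f : V -> W) : Prop :=
  bounded_op f /\
  forall u : nat -> V, (exists M, forall k, (hnorm (u k) <= M)%R) ->
    exists phi : nat -> nat, (forall k, (phi k < phi (S k))%nat) /\
      exists l, converges (fun k => f (u (phi k))) l.

Fixpoint lincomb {V : Hilbert} (cl : list (Cplx * V)) : V :=
  match cl with
  | nil => hzero
  | cons (a, v) t => hadd (hscal a v) (lincomb t)
  end.

Definition in_span {V : Hilbert} (l : list V) (x : V) : Prop :=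
  exists cl : list (Cplx * V), (forall p, List.In p cl -> List.In (snd p) l) /\ x = lincomb cl.

Definition fredholm {V W : Hilbert} (f : V -> W) : Prop :=
  bounded_op f /\
  (exists l : list V, forall x, f x = hzero -> in_span l x) /\
  (* closed range *)
  (forall (u : nat -> V) (y : W), converges (fun k => f (u k)) y -> exists x, f x = y) /\
  (* finite-dimensional cokernel *)
  (exists l : list W, forall y, exists x z, in_span l z /\ y = hadd (f x) z).

Definition is_adjoint {V W : Hilbert} (f : V -> W) (g : W -> V) : Prop :=
  forall x y, hinner (f x) y = hinner x (g y).

Definition selfadjoint {V : Hilbert} (f : V -> V) : Prop := is_adjoint f f.

Definition orth_proj_ker {V W : Hilbert} (f : V -> W) (P : V -> V) : Prop :=
  forall x, f (P x) = hzero /\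
    forall y, f y = hzero -> hinner (hadd x (hopp (P x))) y = C0.

Definition opzero {V W : Hilbert} : V -> W := fun _ => hzero.
Definition opadd {V W : Hilbert} (f g : V -> W) : V -> W := fun x => hadd (f x) (g x).
Definition opsub {V W : Hilbert} (f g : V -> W) : V -> W := fun x => hadd (f x) (hopp (g x)).
Definition opscal {V W : Hilbert} (a : Cplx) (f : V -> W) : V -> W := fun x => hscal a (f x).
Definition opcomp {U V W : Hilbert} (g : V -> W) (f : U -> V) : U -> W := fun x => g (f x).
Definition opid {V : Hilbert} : V -> V := fun x => x.

Unset Implicit Arguments.
Record GOA := {
  G : Type;
  H : G -> Hilbert;
  L0 : forall g0 g1 : G, (H g0 -> H g1) -> Prop;
  Linf : forall g0 g1 : G, (H g0 -> H g1) -> Prop;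
  L0_bounded : forall g0 g1 A, L0 g0 g1 A -> bounded_op A;
  Linf_L0 : forall g0 g1 A, Linf g0 g1 A -> L0 g0 g1 A;
  Linf_compact : forall g0 g1 A, Linf g0 g1 A -> compact_op A;
  L0_zero : forall g0 g1, L0 g0 g1 opzero;
  L0_add : forall g0 g1 A B, L0 g0 g1 A -> L0 g0 g1 B -> L0 g0 g1 (opadd A B);
  L0_scal : forall g0 g1 a A, L0 g0 g1 A -> L0 g0 g1 (opscal a A);
  Linf_zero : forall g0 g1, Linf g0 g1 opzero;
  Linf_add : forall g0 g1 A B, Linf g0 g1 A -> Linf g0 g1 B -> Linf g0 g1 (opadd A B);
  Linf_scal : forall g0 g1 a A, Linf g0 g1 A -> Linf g0 g1 (opscal a A);
  L0_id : forall g, L0 g g opid;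
  L0_comp : forall g0 g1 g2 A B, L0 g0 g1 A -> L0 g1 g2 B -> L0 g0 g2 (opcomp B A);
  Linf_comp_l : forall g0 g1 g2 A B, Linf g0 g1 A -> L0 g1 g2 B -> Linf g0 g2 (opcomp B A);
  Linf_comp_r : forall g0 g1 g2 A B, L0 g0 g1 A -> Linf g1 g2 B -> Linf g0 g2 (opcomp B A);
  L0_adj : forall g0 g1 A, L0 g0 g1 A -> exists B, is_adjoint A B /\ L0 g1 g0 B;
  Linf_adj : forall g0 g1 A, Linf g0 g1 A -> exists B, is_adjoint A B /\ Linf g1 g0 B
}.

Arguments L0 {g3} g0 g1 : rename.
Arguments Linf {g3} g0 g1 : rename.

Definition has_parametrix (L : GOA) (g0 g1 : G L) (A : H L g0 -> H L g1) : Prop :=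
  exists B : H L g1 -> H L g0, L0 g1 g0 B /\
    Linf g0 g0 (opsub (opcomp B A) opid) /\ Linf g1 g1 (opsub (opcomp A B) opid).

(* Hilbert bundles are modelled as families of Hilbert spaces over a base
   X l, and bundle morphisms as families of fibrewise bounded operators. *)
Record Classical (L : GOA) := {
  nsym : nat;
  Xbase : nat -> Type;
  Ebun : forall (l : nat) (g : G L), Xbase l -> Hilbert;
  symb : forall (l : nat) (g0 g1 : G L), (H L g0 -> H L g1) ->
            forall x : Xbase l, Ebun l g0 x -> Ebun l g1 x;
  sym_morph : forall l g0 g1 A, (l < nsym)%nat -> L0 g0 g1 A ->
      forall x, bounded_op (symb l g0 g1 A x);
  sym_add : forall l g0 g1 A B, (l < nsym)%nat -> L0 g0 g1 A -> L0 g0 g1 B ->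
      symb l g0 g1 (opadd A B) = fun x => opadd (symb l g0 g1 A x) (symb l g0 g1 B x);
  sym_scal : forall l g0 g1 a A, (l < nsym)%nat -> L0 g0 g1 A ->
      symb l g0 g1 (opscal a A) = fun x => opscal a (symb l g0 g1 A x);
  sym_mul : forall l g0 g1 g2 A B, (l < nsym)%nat -> L0 g0 g1 A -> L0 g1 g2 B ->
      symb l g0 g2 (opcomp B A) = fun x => opcomp (symb l g1 g2 B x) (symb l g0 g1 A x);
  sym_adj : forall l g0 g1 A B, (l < nsym)%nat -> L0 g0 g1 A -> is_adjoint A B ->
      forall x, is_adjoint (symb l g0 g1 A x) (symb l g1 g0 B x);
  sym_smooth : forall l g0 g1 A, (l < nsym)%nat -> Linf g0 g1 A ->
      symb l g0 g1 A = fun x => opzero;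
  sym_elliptic : forall g0 g1 A, L0 g0 g1 A ->
      ((forall l, (l < nsym)%nat -> forall x,
          exists Bx, (forall v, Bx (symb l g0 g1 A x v) = v) /\
                     (forall w, symb l g0 g1 A x (Bx w) = w))
       <-> has_parametrix L g0 g1 A)
}.

Arguments nsym {L}.
Arguments Xbase {L}.
Arguments Ebun {L}.
Arguments symb {L} c l {g0 g1}.

Definition ext_fredholm (L : GOA) : Prop :=
  (forall g0 g1 (A : H L g0 -> H L g1), L0 g0 g1 A ->
      (has_parametrix L g0 g1 A <-> fredholm A)) /\
  (forall g (A : H L g -> H L g), L0 g g A -> selfadjoint A -> fredholm A ->
      exists B P, L0 g g B /\ orth_proj_ker A P /\
        opcomp A B = opsub opid P /\ opcomp B A = opsub opid P).

(* exactness of 0 -> V 0 -> V 1 -> ... -> V (N+1) -> 0 with maps f 0, ..., f N *)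
Definition exact_seq (V : nat -> Hilbert) (f : forall j, V j -> V (S j)) (N : nat) : Prop :=
  (forall u v, f 0%nat u = f 0%nat v -> u = v) /\
  (forall j, (j < N)%nat -> forall v, f (S j) v = hzero <-> exists u, f j u = v) /\
  (forall w, exists v, f N v = w).

(* Main.v *)
Require Import Defs.
From Stdlib Require Import Reals Arith.
From Stdlib Require Import Lra Lia Psatz Classical ClassicalEpsilon FunctionalExtensionality.
Open Scope R_scope.
Arguments hadd_assoc {h}. Arguments hadd_comm {h}. Arguments hadd_0 {h}.
Arguments hadd_opp {h}. Arguments hscal_1 {h}. Arguments hscal_mul {h}.
Arguments hscal_addv {h}. Arguments hscal_adds {h}. Arguments hinner_add {h}.
Arguments hinner_scal {h}. Arguments hinner_conj {h}. Arguments hinner_pos {h}.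
Arguments hinner_def {h}.

Lemma Ceq (a b : Cplx) : re a = re b -> im a = im b -> a = b.
Proof. destruct a, b; simpl; intros; subst; reflexivity. Qed.

Definition rC (t : R) : Cplx := mkC t 0.

Lemma hadd_0r {V : Hilbert} (x : V) : hadd x hzero = x.
Proof. rewrite hadd_comm; apply hadd_0. Qed.
Lemma hadd_oppr {V : Hilbert} (x : V) : hadd x (hopp x) = hzero.
Proof. rewrite hadd_comm; apply hadd_opp. Qed.
Lemma hadd_cancel_l {V : Hilbert} (a b c : V) : hadd a b = hadd a c -> b = c.
Proof. intro E. rewrite <- (hadd_0 b), <- (hadd_0 c), <- (hadd_opp a), <- !hadd_assoc, E. reflexivity. Qed.
Lemma opp_unique {V : Hilbert} (a b : V) : hadd a b = hzero -> b = hopp a.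
Proof. intro E. apply (hadd_cancel_l a). rewrite E, hadd_oppr. reflexivity. Qed.
Lemma hopp_hopp {V : Hilbert} (a : V) : hopp (hopp a) = a.
Proof. symmetry. apply opp_unique. apply hadd_opp. Qed.
Lemma hopp_0 {V : Hilbert} : hopp (@hzero V) = hzero.
Proof. symmetry. apply opp_unique. apply hadd_0. Qed.
Lemma hopp_add {V : Hilbert} (a b : V) : hopp (hadd a b) = hadd (hopp a) (hopp b).
Proof. symmetry. apply opp_unique.
  rewrite (hadd_comm (hopp a)), hadd_assoc, <- (hadd_assoc a b), hadd_oppr, hadd_0r, hadd_oppr. reflexivity. Qed.
Lemma sub_eq0 {V : Hilbert} (a b : V) : hadd a (hopp b) = hzero -> a = b.
Proof. intro E. rewrite <- (hadd_0r a), <- (hadd_opp b), hadd_assoc, E, hadd_0. reflexivity. Qed.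
Lemma hadd_subK {V : Hilbert} (a b : V) : hadd (hadd a (hopp b)) b = a.
Proof. rewrite <- hadd_assoc, hadd_opp, hadd_0r. reflexivity. Qed.
Lemma hadd_addsub {V : Hilbert} (a b : V) : hadd b (hadd a (hopp b)) = a.
Proof. rewrite hadd_comm. apply hadd_subK. Qed.

Lemma hscal_0 {V : Hilbert} (x : V) : hscal Defs.C0 x = hzero.
Proof. apply (hadd_cancel_l (hscal Defs.C0 x)). rewrite <- hscal_adds, hadd_0r.
  f_equal. apply Ceq; simpl; lra. Qed.
Lemma hopp_scal {V : Hilbert} (x : V) : hopp x = hscal (rC (-1)) x.
Proof. symmetry. apply opp_unique. rewrite <- (hscal_1 x) at 1. rewrite <- hscal_adds.
  replace (Cadd Defs.C1 (rC (-1))) with Defs.C0 by (apply Ceq; simpl; lra). apply hscal_0. Qed.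
Lemma hscal_z {V : Hilbert} a : hscal a (@hzero V) = hzero.
Proof. apply (hadd_cancel_l (hscal a hzero)). rewrite <- hscal_addv, !hadd_0r. reflexivity. Qed.

Lemma Cconj_inv a : Cconj (Cconj a) = a.
Proof. apply Ceq; simpl; lra. Qed.
Lemma hinner_0l {V : Hilbert} (z : V) : hinner hzero z = Defs.C0.
Proof. assert (E := hinner_add hzero hzero z). rewrite hadd_0 in E.
  destruct (hinner hzero z) as [p q]. unfold Cadd in E; simpl in E. injection E; intros.
  apply Ceq; simpl; lra. Qed.
Lemma hinner_0r {V : Hilbert} (z : V) : hinner z hzero = Defs.C0.
Proof. rewrite hinner_conj, hinner_0l. apply Ceq; simpl; lra. Qed.
Lemma hinner_addr {V : Hilbert} (x y z : V) : hinner x (hadd y z) = Cadd (hinner x y) (hinner x z).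
Proof. rewrite hinner_conj, hinner_add, (hinner_conj x y), (hinner_conj x z).
  apply Ceq; simpl; lra. Qed.
Lemma hinner_oppl {V : Hilbert} (x y : V) : hinner (hopp x) y = Cmul (rC (-1)) (hinner x y).
Proof. rewrite hopp_scal, hinner_scal. reflexivity. Qed.
Lemma hinner_oppr {V : Hilbert} (x y : V) : re (hinner x (hopp y)) = - re (hinner x y).
Proof. rewrite hinner_conj, hinner_oppl, (hinner_conj x y). simpl. lra. Qed.
Lemma re_oppl {V : Hilbert} (x y : V) : re (hinner (hopp x) y) = - re (hinner x y).
Proof. rewrite hinner_oppl. simpl. lra. Qed.
Lemma re_sym {V : Hilbert} (x y : V) : re (hinner x y) = re (hinner y x).
Proof. rewrite hinner_conj. reflexivity. Qed.
Lemma re_scal {V : Hilbert} t (x y : V) : re (hinner (hscal (rC t) x) y) = t * re (hinner x y).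
Proof. rewrite hinner_scal. simpl. lra. Qed.
Lemma re_scalr {V : Hilbert} t (x y : V) : re (hinner x (hscal (rC t) y)) = t * re (hinner x y).
Proof. rewrite re_sym, re_scal, re_sym. reflexivity. Qed.
Lemma re_addl {V : Hilbert} (x y z : V) : re (hinner (hadd x y) z) = re (hinner x z) + re (hinner y z).
Proof. rewrite hinner_add. reflexivity. Qed.
Lemma re_addr {V : Hilbert} (x y z : V) : re (hinner z (hadd x y)) = re (hinner z x) + re (hinner z y).
Proof. rewrite hinner_addr. reflexivity. Qed.
Lemma im_self {V : Hilbert} (x : V) : im (hinner x x) = 0.
Proof. assert (E := hinner_conj x x). destruct (hinner x x) as [p q]. unfold Cconj in E; simpl in E.
  injection E; intros; simpl; lra. Qed.

Definition Nsq {V : Hilbert} (x : V) := re (hinner x x).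
Lemma Nsq_ge0 {V : Hilbert} (x : V) : 0 <= Nsq x.
Proof. apply hinner_pos. Qed.
Lemma Nsq_eq0 {V : Hilbert} (x : V) : Nsq x = 0 -> x = hzero.
Proof. intro E. apply hinner_def. apply Ceq; [exact E| rewrite im_self; reflexivity]. Qed.
Lemma hnorm_sq {V : Hilbert} (x : V) : hnorm x * hnorm x = Nsq x.
Proof. unfold hnorm. apply sqrt_sqrt. apply Nsq_ge0. Qed.
Lemma hnorm_ge0 {V : Hilbert} (x : V) : 0 <= hnorm x.
Proof. apply sqrt_pos. Qed.
Lemma hnorm_eq0 {V : Hilbert} (x : V) : hnorm x = 0 -> x = hzero.
Proof. intro E. apply Nsq_eq0. rewrite <- hnorm_sq, E. ring. Qed.
Lemma hnorm_0 {V : Hilbert} : hnorm (@hzero V) = 0.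
Proof. unfold hnorm. rewrite hinner_0l. simpl. apply sqrt_0. Qed.
Lemma Nsq_add {V : Hilbert} (x y : V) : Nsq (hadd x y) = Nsq x + 2 * re (hinner x y) + Nsq y.
Proof. unfold Nsq. rewrite re_addl, !re_addr, (re_sym y x). ring. Qed.
Lemma Nsq_scal {V : Hilbert} t (x : V) : Nsq (hscal (rC t) x) = t * t * Nsq x.
Proof. unfold Nsq. rewrite re_scal, re_scalr. ring. Qed.
Lemma Nsq_opp {V : Hilbert} (x : V) : Nsq (hopp x) = Nsq x.
Proof. rewrite hopp_scal, Nsq_scal. ring. Qed.

Lemma sq_le_norm (a b : R) : 0 <= b -> a * a <= b * b -> Rabs a <= b.
Proof. intros. assert (H1 : Rsqr a <= Rsqr b) by (unfold Rsqr; lra).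
  apply Rsqr_le_abs_0 in H1. rewrite (Rabs_right b) in H1 by lra. exact H1. Qed.

Lemma CS_re {V : Hilbert} (x y : V) : Rabs (re (hinner x y)) <= hnorm x * hnorm y.
Proof.
  destruct (Req_dec (Nsq y) 0) as [Hy|Hy].
  - rewrite (Nsq_eq0 _ Hy), hinner_0r. simpl. rewrite Rabs_R0.
    apply Rmult_le_pos; apply hnorm_ge0.
  - assert (Hp : 0 < Nsq y) by (pose proof (Nsq_ge0 y); lra).
    set (c := re (hinner x y)).
    assert (H0 := Nsq_ge0 (hadd x (hscal (rC (- c / Nsq y)) y))).
    rewrite Nsq_add, Nsq_scal, re_scalr in H0. fold c in H0.
    assert (Hc : c * c <= Nsq x * Nsq y).
    { assert (E : Nsq x + 2 * (- c / Nsq y * c) + - c / Nsq y * (- c / Nsq y) * Nsq y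
                 = (Nsq x * Nsq y - c * c) / Nsq y) by (field; lra).
      rewrite E in H0. apply Rmult_le_compat_r with (r := Nsq y) in H0; [|lra].
      unfold Rdiv in H0. rewrite Rmult_assoc, Rinv_l, Rmult_1_r, Rmult_0_l in H0; lra. }
    rewrite <- !hnorm_sq in Hc. apply sq_le_norm.
    apply Rmult_le_pos; apply hnorm_ge0. lra.
Qed.
Lemma CS_re' {V : Hilbert} (x y : V) : re (hinner x y) <= hnorm x * hnorm y.
Proof. eapply Rle_trans; [apply Rle_abs | apply CS_re]. Qed.


Lemma norm_le_of_sq {V : Hilbert} (x : V) b : 0 <= b -> Nsq x <= b * b -> hnorm x <= b.
Proof. intros Hb E. rewrite <- hnorm_sq in E. pose proof (sq_le_norm _ _ Hb E).
  rewrite Rabs_right in H by (apply Rle_ge, hnorm_ge0). exact H. Qed.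

Lemma norm_tri {V : Hilbert} (x y : V) : hnorm (hadd x y) <= hnorm x + hnorm y.
Proof. apply norm_le_of_sq. pose proof (hnorm_ge0 x); pose proof (hnorm_ge0 y); lra.
  rewrite Nsq_add, <- !hnorm_sq. pose proof (CS_re' x y). nra. Qed.
Lemma norm_scal {V : Hilbert} t (x : V) : hnorm (hscal (rC t) x) = Rabs t * hnorm x.
Proof. unfold hnorm at 1. fold (Nsq (hscal (rC t) x)). rewrite Nsq_scal, <- hnorm_sq.
  replace (t * t * (hnorm x * hnorm x)) with (Rsqr (Rabs t * hnorm x)).
  apply sqrt_Rsqr. apply Rmult_le_pos; [apply Rabs_pos|apply hnorm_ge0].
  unfold Rsqr. replace (Rabs t * hnorm x * (Rabs t * hnorm x)) with ((Rabs t * Rabs t) * (hnorm x * hnorm x)) by ring.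
  rewrite <- Rabs_mult, Rabs_right. ring. apply Rle_ge. nra. Qed.
Lemma norm_opp {V : Hilbert} (x : V) : hnorm (hopp x) = hnorm x.
Proof. rewrite hopp_scal, norm_scal. replace (Rabs (-1)) with 1 by (rewrite Rabs_left; lra). ring. Qed.
Lemma norm_sub_tri {V : Hilbert} (x y z : V) : hnorm (hadd x (hopp z)) <= hnorm (hadd x (hopp y)) + hnorm (hadd y (hopp z)).
Proof. eapply Rle_trans; [|apply norm_tri]. right. f_equal.
  rewrite <- hadd_assoc, (hadd_assoc (hopp y)), hadd_opp, hadd_0. reflexivity. Qed.
Lemma hdist_tri {V : Hilbert} (x y z : V) : hdist x z <= hdist x y + hdist y z.
Proof. apply norm_sub_tri. Qed.
Lemma hdist_sym {V : Hilbert} (x y : V) : hdist x y = hdist y x.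
Proof. unfold hdist. rewrite <- norm_opp, hopp_add, hopp_hopp, hadd_comm. reflexivity. Qed.
Lemma hdist_ge0 {V : Hilbert} (x y : V) : 0 <= hdist x y.
Proof. apply hnorm_ge0. Qed.
Lemma hdist_eq0 {V : Hilbert} (x y : V) : hdist x y = 0 -> x = y.
Proof. intro E. apply sub_eq0, hnorm_eq0, E. Qed.
Lemma hdist_refl {V : Hilbert} (x : V) : hdist x x = 0.
Proof. unfold hdist. rewrite hadd_oppr. apply hnorm_0. Qed.


Lemma lin_0 {V W : Hilbert} (f : V -> W) : linear_op f -> f hzero = hzero.
Proof. intros [Ha _]. apply (hadd_cancel_l (f hzero)). rewrite <- Ha, !hadd_0r. reflexivity. Qed.
Lemma lin_opp {V W : Hilbert} (f : V -> W) x : linear_op f -> f (hopp x) = hopp (f x).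
Proof. intros Hf. apply opp_unique. destruct Hf as [Ha Hs]. rewrite <- Ha, hadd_oppr. apply lin_0. split; auto. Qed.
Lemma lin_sub {V W : Hilbert} (f : V -> W) x y : linear_op f -> f (hadd x (hopp y)) = hadd (f x) (hopp (f y)).
Proof. intros Hf. rewrite (proj1 Hf), lin_opp; auto. Qed.
Lemma lin_add {V W : Hilbert} (f : V -> W) x y : linear_op f -> f (hadd x y) = hadd (f x) (f y).
Proof. intros Hf. apply (proj1 Hf). Qed.
Lemma lin_scal {V W : Hilbert} (f : V -> W) a x : linear_op f -> f (hscal a x) = hscal a (f x).
Proof. intros Hf. apply (proj2 Hf). Qed.

Lemma bnd_pos {V W : Hilbert} (f : V -> W) : bounded_op f -> exists M, 0 < M /\ forall x, hnorm (f x) <= M * hnorm x.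
Proof. intros [_ [M HM]]. exists (Rmax M 1). split. pose proof (Rmax_r M 1); lra.
  intro x. eapply Rle_trans; [apply HM|]. apply Rmult_le_compat_r; [apply hnorm_ge0|apply Rmax_l]. Qed.

Lemma bnd_dist {V W : Hilbert} (f : V -> W) M : linear_op f -> (forall x, hnorm (f x) <= M * hnorm x) ->
  forall x y, hdist (f x) (f y) <= M * hdist x y.
Proof. intros Hl HM x y. unfold hdist. rewrite <- lin_sub by auto. apply HM. Qed.

Lemma cont {V W : Hilbert} (f : V -> W) u l : bounded_op f -> converges u l -> converges (fun k => f (u k)) (f l).
Proof. intros Hb Hc eps He. destruct (bnd_pos f Hb) as [M [HM HMb]].
  destruct (Hc (eps / M)) as [N HN]. apply Rdiv_lt_0_compat; lra.
  exists N. intros m Hm. eapply Rle_lt_trans. apply (bnd_dist f M (proj1 Hb) HMb).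
  specialize (HN m Hm). apply Rmult_lt_compat_l with (r := M) in HN; auto.
  replace (M * (eps / M)) with eps in HN by (field; lra). exact HN. Qed.

Lemma lim_unique {V : Hilbert} (u : nat -> V) l1 l2 : converges u l1 -> converges u l2 -> l1 = l2.
Proof. intros H1 H2. apply hdist_eq0. destruct (Req_dec (hdist l1 l2) 0) as [E|E]; auto.
  exfalso. pose proof (hdist_ge0 l1 l2) as G. set (e := hdist l1 l2 / 2).
  destruct (H1 e) as [N1 HN1]. unfold e; lra. destruct (H2 e) as [N2 HN2]. unfold e; lra.
  specialize (HN1 (N1 + N2)%nat ltac:(lia)). specialize (HN2 (N1 + N2)%nat ltac:(lia)).
  pose proof (hdist_tri l1 (u (N1+N2)%nat) l2). rewrite hdist_sym in HN1. unfold e in *. lra. Qed.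

Lemma lim_ball {V : Hilbert} (u : nat -> V) l c rho N : converges u l ->
  (forall m, (N <= m)%nat -> hdist (u m) c <= rho) -> hdist l c <= rho.
Proof. intros Hc Hb. apply Rnot_lt_le. intro Hlt.
  destruct (Hc (hdist l c - rho)) as [N1 HN1]. lra.
  specialize (HN1 (N + N1)%nat ltac:(lia)). specialize (Hb (N + N1)%nat ltac:(lia)).
  pose proof (hdist_tri l (u (N+N1)%nat) c). rewrite hdist_sym in HN1. lra. Qed.

Lemma conv_const {V : Hilbert} (c : V) : converges (fun _ => c) c.
Proof. intros e He. exists 0%nat. intros. rewrite hdist_refl. exact He. Qed.

Lemma conv_ext {V : Hilbert} (u v : nat -> V) l : (forall k, u k = v k) -> converges u l -> converges v l.
Proof. intros E Hc e He. destruct (Hc e He) as [N HN]. exists N. intros m Hm. rewrite <- E. auto. Qed.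

Lemma cauchy_conv {V : Hilbert} (u : nat -> V) :
  (forall eps, 0 < eps -> exists N, forall m k, (N <= m)%nat -> (N <= k)%nat -> hdist (u m) (u k) < eps) ->
  exists l, converges u l.
Proof. intro H. exact (hcomplete V u H). Qed.

Lemma geom_partial {V : Hilbert} (u : nat -> V) D q : 0 <= q -> q < 1 ->
  (forall k, hdist (u (S k)) (u k) <= D * q ^ k) ->
  forall k p, hdist (u (k + p)%nat) (u k) <= D * q ^ k * (1 - q ^ p) / (1 - q).
Proof. intros Hq0 Hq1 Hs k p. induction p.
  - rewrite Nat.add_0_r, hdist_refl. simpl. right. field. lra.
  - eapply Rle_trans. apply (hdist_tri _ (u (k + p)%nat)).
    replace (k + S p)%nat with (S (k + p)) by lia.
    eapply Rle_trans. apply Rplus_le_compat; [apply Hs | apply IHp].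
    rewrite pow_add. simpl. right. field. lra. Qed.

Lemma geom_conv {V : Hilbert} (u : nat -> V) D q : 0 <= D -> 0 <= q -> q < 1 ->
  (forall k, hdist (u (S k)) (u k) <= D * q ^ k) -> exists l, converges u l.
Proof. intros HD Hq0 Hq1 Hs. apply cauchy_conv. intros eps He.
  assert (Hb : forall k p, hdist (u (k + p)%nat) (u k) <= D * q ^ k / (1 - q)).
  { intros k p. eapply Rle_trans. apply (geom_partial u D q Hq0 Hq1 Hs).
    unfold Rdiv. apply Rmult_le_compat_r. left; apply Rinv_0_lt_compat; lra.
    pose proof (pow_le q p Hq0). pose proof (pow_le q k Hq0).
    assert (q ^ p <= 1) by (rewrite <- (pow1 p); apply pow_incr; lra).
    assert (0 <= D * q ^ k) by (apply Rmult_le_pos; auto). nra. }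
  destruct (pow_lt_1_zero q ltac:(rewrite Rabs_right; lra) (eps * (1 - q) / (2 * (D + 1)))) as [N HN].
  apply Rdiv_lt_0_compat; nra.
  exists N. intros m k Hm Hk.
  specialize (HN N (le_n _)). rewrite Rabs_right in HN by (apply Rle_ge, pow_le; lra).
  assert (E : forall j, (N <= j)%nat -> hdist (u j) (u N) <= D * q ^ N / (1 - q)).
  { intros j Hj. replace j with (N + (j - N))%nat by lia. apply Hb. }
  pose proof (E m Hm). pose proof (E k Hk). pose proof (hdist_tri (u m) (u N) (u k)).
  rewrite (hdist_sym (u N) (u k)) in H1.
  assert (D * q ^ N / (1 - q) < eps / 2).
  { apply Rmult_lt_reg_r with (r := (1 - q)). lra. unfold Rdiv. rewrite Rmult_assoc, Rinv_l, Rmult_1_r by lra.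
    pose proof (pow_le q N Hq0).
    apply Rle_lt_trans with ((D + 1) * q ^ N). nra.
    apply Rmult_lt_compat_l with (r := D + 1) in HN; [|lra].
    replace ((D + 1) * (eps * (1 - q) / (2 * (D + 1)))) with (eps / 2 * (1 - q)) in HN by (field; lra). lra. }
  lra. Qed.


Lemma G1 {V : Hilbert} (a b : V) : hadd (hadd a b) (hopp a) = b.
Proof. rewrite (hadd_comm a b), <- hadd_assoc, hadd_oppr, hadd_0r. reflexivity. Qed.
Lemma G_swap {V : Hilbert} (a b c d : V) : hadd (hadd a b) (hadd c d) = hadd (hadd a c) (hadd b d).
Proof. rewrite <- !hadd_assoc. f_equal. rewrite !hadd_assoc. f_equal. apply hadd_comm. Qed.
Lemma G2 {V : Hilbert} (a b c d : V) :
  hadd (hadd a (hopp b)) (hopp (hadd c (hopp d))) = hadd (hadd a (hopp c)) (hopp (hadd b (hopp d))).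
Proof. rewrite !hopp_add, !hopp_hopp, G_swap. reflexivity. Qed.
Lemma dist_sub2 {V : Hilbert} (a b c d : V) :
  hdist (hadd a (hopp b)) (hadd c (hopp d)) <= hdist a c + hdist b d.
Proof. unfold hdist at 1. rewrite G2. eapply Rle_trans. apply norm_tri. rewrite norm_opp. right; reflexivity. Qed.
Lemma norm_sub_le {V : Hilbert} (a b : V) : hnorm (hadd a (hopp b)) <= hnorm a + hnorm b.
Proof. eapply Rle_trans. apply norm_tri. rewrite norm_opp. lra. Qed.
Lemma dist_0r {V : Hilbert} (a : V) : hdist a hzero = hnorm a.
Proof. unfold hdist. rewrite hopp_0, hadd_0r. reflexivity. Qed.
Lemma hopp_scal_comm {V : Hilbert} a (v : V) : hopp (hscal a v) = hscal a (hopp v).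
Proof. rewrite !hopp_scal, !hscal_mul. f_equal. apply Ceq; simpl; ring. Qed.
Lemma dist_scal {V : Hilbert} t (u v : V) : hdist (hscal (rC t) u) (hscal (rC t) v) = Rabs t * hdist u v.
Proof. unfold hdist. rewrite hopp_scal_comm, <- hscal_addv, norm_scal. reflexivity. Qed.
Lemma scal_inv {V : Hilbert} t (v : V) : t <> 0 -> hscal (rC (/ t)) (hscal (rC t) v) = v.
Proof. intro Ht. rewrite hscal_mul. replace (Cmul (rC (/ t)) (rC t)) with Defs.C1. apply hscal_1.
  apply Ceq; simpl; field; auto. Qed.
Lemma dist_comm_sub {V : Hilbert} (a b : V) : hnorm (hadd a (hopp b)) = hdist a b.
Proof. reflexivity. Qed.

Lemma conv_to0 {V : Hilbert} (u : nat -> V) c q : 0 <= q < 1 -> (forall k, hnorm (u k) <= c * q ^ k) -> converges u hzero.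
Proof. intros Hq Hu eps He.
  destruct (pow_lt_1_zero q ltac:(rewrite Rabs_right; lra) (eps / (Rabs c + 1))) as [N HN].
  apply Rdiv_lt_0_compat; [lra| pose proof (Rabs_pos c); lra].
  exists N. intros m Hm. rewrite dist_0r. specialize (HN m Hm). specialize (Hu m).
  rewrite Rabs_right in HN by (apply Rle_ge, pow_le; lra).
  pose proof (pow_le q m ltac:(lra)). pose proof (Rle_abs c). pose proof (Rabs_pos c).
  apply Rmult_lt_compat_l with (r := Rabs c + 1) in HN; [|lra].
  replace ((Rabs c + 1) * (eps / (Rabs c + 1))) with eps in HN by (field; lra). nra. Qed.

Definition closed_im {X Y : Hilbert} (T : X -> Y) : Prop :=
  forall (u : nat -> X) y, converges (fun k => T (u k)) y -> exists x, T x = y.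

Lemma baire_step {X Y : Hilbert} (T : X -> Y) : bounded_op T -> closed_im T ->
  exists (n : nat) (x0 : X) (eps : R), 0 < eps /\ forall x : X, hdist (T x) (T x0) < eps ->
     forall delta, 0 < delta -> exists x' : X, hnorm x' <= INR n /\ hdist (T x') (T x) < delta.
Proof.
  intros HT CI. apply NNPP. intro NB.
  assert (Hneg : forall n x0 eps, 0 < eps -> exists p : X * R,
     hdist (T (fst p)) (T x0) < eps /\ 0 < snd p /\
     forall x', hnorm x' <= INR n -> snd p <= hdist (T x') (T (fst p))).
  { intros n x0 eps He. apply NNPP. intro C. apply NB. exists n, x0, eps. split; auto.
    intros x Hx delta Hd. apply NNPP. intro C2. apply C. exists (x, delta). simpl. split; auto. split; auto.
    intros x' Hx'. apply Rnot_lt_le. intro Hlt. apply C2. exists x'. auto. }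
  assert (F : forall n x0 eps, {p : X * R | 0 < eps ->
     hdist (T (fst p)) (T x0) < eps /\ 0 < snd p /\
     forall x', hnorm x' <= INR n -> snd p <= hdist (T x') (T (fst p))}).
  { intros n x0 eps. apply constructive_indefinite_description.
    destruct (Rlt_dec 0 eps) as [He|He].
    - destruct (Hneg n x0 eps He) as [p Hp]. exists p. auto.
    - exists (hzero, 0). intro; lra. }
  pose (seq := nat_rect (fun _ => (X * R)%type) (hzero, 1)
         (fun k p => let q := proj1_sig (F k (fst p) (snd p / 2)) in (fst q, Rmin (snd p / 2) (snd q / 2)))).
  assert (Sseq : forall k, seq (S k) = (fst (proj1_sig (F k (fst (seq k)) (snd (seq k) / 2))),
       Rmin (snd (seq k) / 2) (snd (proj1_sig (F k (fst (seq k)) (snd (seq k) / 2))) / 2))) by reflexivity.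
  assert (S0 : seq 0%nat = (hzero, 1)) by reflexivity.
  clearbody seq.
  assert (Hr : forall k, 0 < snd (seq k) /\ snd (seq k) <= (/2) ^ k).
  { induction k as [|k [IH1 IH2]].
    - rewrite S0. simpl. lra.
    - rewrite Sseq. cbn [fst snd].
      pose proof (proj2_sig (F k (fst (seq k)) (snd (seq k) / 2))) as P.
      destruct (P ltac:(lra)) as [_ [Hd _]]. split. apply Rmin_glb_lt; lra.
      eapply Rle_trans. apply Rmin_l. simpl. lra. }
  assert (Hstep : forall k, hdist (T (fst (seq (S k)))) (T (fst (seq k))) < snd (seq k) / 2 /\ snd (seq (S k)) <= snd (seq k) / 2 /\
     forall x', hnorm x' <= INR k -> 2 * snd (seq (S k)) <= hdist (T x') (T (fst (seq (S k))))).
  { intro k. rewrite Sseq. cbn [fst snd].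
    pose proof (proj2_sig (F k (fst (seq k)) (snd (seq k) / 2))) as P.
    destruct (P ltac:(destruct (Hr k); lra)) as [H1 [H2 H3]].
    split; auto. split. apply Rmin_l. intros x' Hx'. specialize (H3 x' Hx').
    pose proof (Rmin_r (snd (seq k) / 2) (snd (proj1_sig (F k (fst (seq k)) (snd (seq k) / 2))) / 2)). lra. }
  clear Sseq.
  assert (Hnest : forall k p, hdist (T (fst (seq (k + p)%nat))) (T (fst (seq k))) <= snd (seq k) - snd (seq (k + p)%nat)).
  { intros k p. induction p. rewrite Nat.add_0_r, hdist_refl. lra.
    replace (k + S p)%nat with (S (k + p)) by lia.
    destruct (Hstep (k + p)%nat) as [A1 [A2 _]].
    pose proof (hdist_tri (T (fst (seq (S (k + p))))) (T (fst (seq (k + p)%nat))) (T (fst (seq k)))). lra. }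
  destruct (geom_conv (fun k => T (fst (seq k))) 1 (/2) ltac:(lra) ltac:(lra) ltac:(lra)) as [y Hy].
  { intro k. destruct (Hstep k) as [A _]. destruct (Hr k). lra. }
  destruct (CI (fun k => fst (seq k)) y Hy) as [xs Hxs].
  destruct (INR_unbounded (hnorm xs)) as [k Hk].
  assert (B : hdist y (T (fst (seq (S k)))) <= snd (seq (S k))).
  { apply (lim_ball _ y _ _ (S k) Hy). intros m Hm. replace m with (S k + (m - S k))%nat by lia.
    pose proof (Hnest (S k) (m - S k)%nat). destruct (Hr (S k + (m - S k))%nat). lra. }
  destruct (Hstep k) as [_ [_ H3]]. specialize (H3 xs ltac:(lra)). rewrite Hxs in H3.
  destruct (Hr (S k)). lra.
Qed.

Lemma om_approx {X Y : Hilbert} (T : X -> Y) : bounded_op T -> closed_im T ->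
  exists K, 0 <= K /\ forall x delta, 0 < delta ->
    exists x', hnorm x' <= K * hnorm (T x) /\ hdist (T x') (T x) < delta.
Proof.
  intros HT CI. destruct (baire_step T HT CI) as [n [x0 [eps [He Hb]]]].
  assert (Hl := proj1 HT).
  exists (4 * INR n / eps). split. apply Rmult_le_pos. pose proof (pos_INR n); lra. left; apply Rinv_0_lt_compat; lra.
  intros x delta Hd.
  destruct (Req_dec (hnorm (T x)) 0) as [Z|Z].
  - exists hzero. rewrite (lin_0 T Hl), (hnorm_eq0 _ Z), hdist_refl, !hnorm_0. split; [rewrite Rmult_0_r; lra | lra].
  - set (c := hnorm (T x)). assert (Hc : 0 < c) by (pose proof (hnorm_ge0 (T x)); unfold c; lra).
    set (s := eps / (2 * c)). assert (Hs : 0 < s) by (unfold s; apply Rdiv_lt_0_compat; lra).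
    set (y := hscal (rC s) x).
    assert (Ty : T y = hscal (rC s) (T x)) by (apply lin_scal; auto).
    assert (E1 : hdist (T (hadd x0 y)) (T x0) < eps).
    { rewrite lin_add by auto. unfold hdist. rewrite G1, Ty, norm_scal, Rabs_right by lra.
      fold c. unfold s. replace (eps / (2 * c) * c) with (eps / 2) by (field; lra). lra. }
    destruct (Hb _ E1 (delta * s / 2)) as [x1 [N1 D1]]. apply Rmult_lt_0_compat; nra.
    destruct (Hb x0 ltac:(rewrite hdist_refl; lra) (delta * s / 2)) as [x2 [N2 D2]]. apply Rmult_lt_0_compat; nra.
    exists (hscal (rC (/ s)) (hadd x1 (hopp x2))). split.
    + rewrite norm_scal, Rabs_right by (apply Rle_ge; left; apply Rinv_0_lt_compat; lra).
      pose proof (norm_sub_le x1 x2).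
      apply Rle_trans with (/ s * (2 * INR n)). apply Rmult_le_compat_l. left; apply Rinv_0_lt_compat; lra. lra.
      fold c. unfold s. right. field. split; lra.
    + rewrite lin_scal by auto. rewrite <- (scal_inv s (T x)) by lra. rewrite dist_scal.
      rewrite Rabs_right by (apply Rle_ge; left; apply Rinv_0_lt_compat; lra).
      rewrite lin_sub by auto. rewrite <- Ty.
      replace (T y) with (hadd (T (hadd x0 y)) (hopp (T x0))) by (rewrite lin_add by auto; apply G1).
      pose proof (dist_sub2 (T x1) (T x2) (T (hadd x0 y)) (T x0)).
      apply Rlt_le_trans with (/ s * (delta * s / 2 + delta * s / 2)).
      apply Rmult_lt_compat_l. apply Rinv_0_lt_compat; lra. lra.
      right. field. lra.
Qed.

Lemma open_mapping {X Y : Hilbert} (T : X -> Y) : bounded_op T -> closed_im T ->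
  exists C, 0 <= C /\ forall x, exists x', T x' = T x /\ hnorm x' <= C * hnorm (T x).
Proof.
  intros HT CI. destruct (om_approx T HT CI) as [K [HK HA]]. assert (Hl := proj1 HT).
  exists (2 * K). split. lra. intro x.
  destruct (Req_dec (hnorm (T x)) 0) as [Z|Z].
  { exists hzero. rewrite (lin_0 T Hl), (hnorm_eq0 _ Z), !hnorm_0. split; auto. rewrite Rmult_0_r; lra. }
  set (c := hnorm (T x)). assert (Hc : 0 < c) by (pose proof (hnorm_ge0 (T x)); unfold c; lra).
  assert (F : forall z k, {x' : X | hnorm x' <= K * hnorm (T z) /\ hdist (T x') (T z) < c * (/2) ^ (S k)}).
  { intros z k. apply constructive_indefinite_description. apply HA. apply Rmult_lt_0_compat; auto. apply pow_lt; lra. }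
  pose (z := nat_rect (fun _ => X) x (fun k zk => hadd zk (hopp (proj1_sig (F zk k))))).
  assert (Sz : forall k, z (S k) = hadd (z k) (hopp (proj1_sig (F (z k) k)))) by reflexivity.
  assert (Z0 : z 0%nat = x) by reflexivity. clearbody z.
  assert (Hz : forall k, hnorm (T (z k)) <= c * (/2) ^ k /\ hdist (z (S k)) (z k) <= K * c * (/2) ^ k).
  { induction k.
    - split. rewrite Z0. simpl. unfold c; right; ring. rewrite Sz. unfold hdist. rewrite (hadd_comm (z 0%nat)), <- hadd_assoc, hadd_oppr, hadd_0r, norm_opp.
      destruct (proj2_sig (F (z 0%nat) 0%nat)) as [A _]. rewrite Z0 in A |- *. fold c in A. simpl. rewrite Rmult_1_r. exact A.
    - destruct IHk as [IH _]. assert (H1 : hnorm (T (z (S k))) <= c * (/2) ^ S k).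
      { rewrite Sz, lin_sub by auto. rewrite <- norm_opp, hopp_add, hopp_hopp, hadd_comm.
        destruct (proj2_sig (F (z k) k)) as [_ A]. left; exact A. }
      split; auto. rewrite (Sz (S k)). unfold hdist. rewrite (hadd_comm (z (S k))), <- hadd_assoc, hadd_oppr, hadd_0r, norm_opp.
      destruct (proj2_sig (F (z (S k)) (S k))) as [A _]. eapply Rle_trans. apply A.
      rewrite Rmult_assoc. apply Rmult_le_compat_l; auto. }
  destruct (geom_conv z (K * c) (/2) ltac:(nra) ltac:(lra) ltac:(lra)) as [zs Hzs].
  { intro k. apply (proj2 (Hz k)). }
  assert (T0 : T zs = hzero).
  { apply (lim_unique (fun k => T (z k))). apply cont; auto.
    apply (conv_to0 _ c (/2)). lra. intro k. apply (proj1 (Hz k)). }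
  exists (hadd x (hopp zs)). split.
  - rewrite lin_sub, T0, hopp_0, hadd_0r by auto. reflexivity.
  - fold c. change (hdist x zs <= 2 * K * c). rewrite hdist_sym.
    apply (lim_ball z zs x _ 0 Hzs). intros m _.
    pose proof (geom_partial z (K * c) (/2) ltac:(lra) ltac:(lra) (fun k => proj2 (Hz k)) 0 m).
    simpl in H. rewrite Rmult_1_r, Z0 in H. eapply Rle_trans. apply H.
    assert (0 <= (/2) ^ m) by (apply pow_le; lra). assert (0 <= K * c) by nra.
    replace (2 * K * c) with (K * c * 1 / (1 - /2)) by field. unfold Rdiv.
    apply Rmult_le_compat_r. lra. nra.
Qed.


Lemma conv_shift {V : Hilbert} (u : nat -> V) l : converges u l -> converges (fun k => u (S k)) l.
Proof. intros Hc e He. destruct (Hc e He) as [N HN]. exists N. intros m Hm. apply HN. lia. Qed.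

Lemma le_div_case (a b C : R) : 0 <= a -> 0 <= b -> 0 <= C -> a * a <= C * a * b -> a <= C * b.
Proof. intros Ha Hb HC H. destruct (Req_dec a 0) as [E|E]. subst. nra.
  assert (0 < a) by lra. apply Rmult_le_reg_r with a; auto. nra. Qed.

Lemma fib_coercive {U V W Y : Hilbert} (r : U -> V) (rs : V -> U) (a : V -> W) (b : W -> Y) :
  bounded_op r -> bounded_op rs -> bounded_op a -> bounded_op b -> is_adjoint r rs ->
  (forall v, a v = hzero <-> exists u, r u = v) ->
  (forall w, b w = hzero -> exists v, a v = w) -> (forall v, b (a v) = hzero) ->
  exists c, 0 < c /\ forall v, c * Nsq v <= Nsq (a v) + Nsq (rs v).
Proof.
  intros Hr Hrs Ha Hb Hadj Ex1 Ex2 Ex2b.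
  assert (CIa : closed_im a).
  { intros u y Hc. apply Ex2. apply (lim_unique (fun k => b (a (u k)))).
    apply cont; auto. apply (conv_ext (fun _ => hzero)). intro k; symmetry; apply Ex2b. apply conv_const. }
  assert (CIr : closed_im r).
  { intros u y Hc. apply Ex1. apply (lim_unique (fun k => a (r (u k)))).
    apply cont; auto. apply (conv_ext (fun _ => hzero)). intro k; symmetry; apply Ex1. exists (u k); auto. apply conv_const. }
  destruct (open_mapping a Ha CIa) as [C1 [HC1 OM1]].
  destruct (open_mapping r Hr CIr) as [C2 [HC2 OM2]].
  destruct (bnd_pos rs Hrs) as [B [HB HBb]].
  set (al := C1 + C2 + C2 * B * C1).
  assert (Hal : 0 <= al) by (unfold al; assert (0 <= C2 * B * C1) by (apply Rmult_le_pos; nra); lra).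
  assert (Key : forall v, hnorm v <= al * (hnorm (a v) + hnorm (rs v))).
  { intro v. destruct (OM1 v) as [v1 [Ev1 Nv1]].
    set (k := hadd v (hopp v1)).
    assert (ak : a k = hzero) by (unfold k; rewrite lin_sub, Ev1, hadd_oppr by apply (proj1 Ha); reflexivity).
    destruct (proj1 (Ex1 k) ak) as [u0 Hu0]. destruct (OM2 u0) as [u [Eu Nu]]. rewrite Hu0 in Eu, Nu.
    assert (Nk : hnorm k <= C2 * hnorm (rs k)).
    { apply le_div_case; try apply hnorm_ge0; auto. rewrite hnorm_sq. unfold Nsq. rewrite <- Eu at 1. rewrite Hadj.
      eapply Rle_trans. apply CS_re'. apply Rmult_le_compat_r. apply hnorm_ge0. exact Nu. }
    assert (Nrk : hnorm (rs k) <= hnorm (rs v) + B * hnorm v1).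
    { unfold k. rewrite lin_sub by apply (proj1 Hrs). eapply Rle_trans. apply norm_sub_le. pose proof (HBb v1). lra. }
    assert (Ev : v = hadd v1 k) by (unfold k; symmetry; apply hadd_addsub).
    rewrite Ev at 1. eapply Rle_trans. apply norm_tri.
    pose proof (hnorm_ge0 (a v)). pose proof (hnorm_ge0 (rs v)). pose proof (hnorm_ge0 v1).
    assert (C2 * hnorm (rs k) <= C2 * (hnorm (rs v) + B * hnorm v1)) by (apply Rmult_le_compat_l; auto).
    assert (C2 * B * hnorm v1 <= C2 * B * (C1 * hnorm (a v))) by (apply Rmult_le_compat_l; nra).
    assert (0 <= C1 * hnorm (rs v)) by (apply Rmult_le_pos; auto).
    assert (0 <= C2 * hnorm (a v)) by (apply Rmult_le_pos; auto).
    assert (0 <= C2 * B * C1 * hnorm (rs v)) by (apply Rmult_le_pos; auto; apply Rmult_le_pos; nra).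
    unfold al. ring_simplify. lra. }
  exists (/ (2 * al * al + 1)). split. apply Rinv_0_lt_compat. nra.
  intro v. specialize (Key v). rewrite <- !hnorm_sq.
  pose proof (hnorm_ge0 v). pose proof (hnorm_ge0 (a v)). pose proof (hnorm_ge0 (rs v)).
  set (A := hnorm (a v)) in *. set (Bn := hnorm (rs v)) in *. set (n := hnorm v) in *.
  assert (n * n <= (2 * al * al + 1) * (A * A + Bn * Bn)).
  { assert (n * n <= (al * (A + Bn)) * (al * (A + Bn))) by (apply Rmult_le_compat; nra).
    assert ((A+Bn)*(A+Bn) <= 2*(A*A+Bn*Bn)) by (pose proof (Rle_0_sqr (A - Bn)); unfold Rsqr in *; lra).
    assert (0 <= al*al) by (apply Rmult_le_pos; auto).
    assert (al * al * ((A+Bn)*(A+Bn)) <= al * al * (2*(A*A+Bn*Bn))) by (apply Rmult_le_compat_l; auto).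
    assert (0 <= A * A + Bn * Bn) by nra. nra. }
  apply Rmult_le_reg_l with (2 * al * al + 1). nra.
  rewrite <- Rmult_assoc, Rinv_r, Rmult_1_l by nra. lra.
Qed.

Lemma G3 {V : Hilbert} (a b c d : V) : hadd (hadd a b) (hopp (hadd c d)) = hadd (hadd a (hopp c)) (hadd b (hopp d)).
Proof. rewrite hopp_add, G_swap. reflexivity. Qed.

Lemma scal_sub {V : Hilbert} a (x y : V) : hscal a (hadd x (hopp y)) = hadd (hscal a x) (hopp (hscal a y)).
Proof. rewrite hscal_addv, hopp_scal_comm. reflexivity. Qed.

Lemma coercive_surj {V : Hilbert} (M : V -> V) : bounded_op M ->
  forall c, 0 < c -> (forall v, c * Nsq v <= re (hinner (M v) v)) -> forall w, exists v, M v = w.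
Proof.
  intros HM c Hc Hco w. destruct (bnd_pos M HM) as [K [HK HKb]]. assert (Hl := proj1 HM).
  set (K' := K + c). assert (HK' : c < K') by (unfold K'; lra).
  set (t := c / (K' * K')).
  assert (Ht : 0 < t) by (unfold t; apply Rdiv_lt_0_compat; nra).
  set (Sop := fun x => hadd x (hscal (rC (- t)) (M x))).
  set (q2 := 1 - c * c / (K' * K')).
  assert (Hq2 : 0 <= q2 < 1).
  { unfold q2. assert (0 < c * c / (K' * K')) by (apply Rdiv_lt_0_compat; nra).
    assert (c * c / (K' * K') <= 1). { apply Rmult_le_reg_r with (K' * K'). nra. unfold Rdiv. rewrite Rmult_assoc, Rinv_l by nra. nra. } lra. }
  set (q := sqrt q2). assert (Hq : 0 <= q < 1).
  { unfold q. split. apply sqrt_pos. rewrite <- sqrt_1. apply sqrt_lt_1; lra. }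
  assert (HS : forall x, hnorm (Sop x) <= q * hnorm x).
  { intro x. apply norm_le_of_sq. apply Rmult_le_pos. lra. apply hnorm_ge0.
    unfold Sop. rewrite Nsq_add, Nsq_scal, re_scalr, re_sym.
    replace (q * hnorm x * (q * hnorm x)) with (q2 * Nsq x) by (unfold q; rewrite <- hnorm_sq; rewrite <- (sqrt_sqrt q2) at 1 by lra; ring).
    specialize (Hco x). assert (Nsq (M x) <= K' * K' * Nsq x).
    { rewrite <- !hnorm_sq. pose proof (HKb x). pose proof (hnorm_ge0 (M x)). pose proof (hnorm_ge0 x).
      assert (hnorm (M x) <= K' * hnorm x) by (unfold K'; nra). nra. }
    unfold q2. pose proof (Nsq_ge0 x).
    assert (t * t * Nsq (M x) <= t * t * (K' * K' * Nsq x)) by (apply Rmult_le_compat_l; nra).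
    assert (t * t * (K' * K' * Nsq x) = t * c * Nsq x) by (unfold t; field; nra).
    assert (c * c / (K' * K') * Nsq x = t * c * Nsq x) by (unfold t; field; nra).
    assert (t * (c * Nsq x) <= t * re (hinner (M x) x)) by (apply Rmult_le_compat_l; lra).
    nra. }
  assert (Slip : forall x y, hdist (Sop x) (Sop y) <= q * hdist x y).
  { intros x y. unfold hdist. replace (hadd (Sop x) (hopp (Sop y))) with (Sop (hadd x (hopp y))). apply HS.
    unfold Sop. rewrite G3, lin_sub, scal_sub by auto. reflexivity. }
  set (Phi := fun x => hadd (Sop x) (hscal (rC t) w)).
  assert (Plip : forall x y, hdist (Phi x) (Phi y) <= q * hdist x y).
  { intros x y. unfold Phi, hdist. rewrite G3, hadd_oppr, hadd_0r. apply Slip. }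
  pose (v := nat_rect (fun _ => V) hzero (fun _ x => Phi x)).
  assert (Sv : forall k, v (S k) = Phi (v k)) by reflexivity. clearbody v.
  destruct (geom_conv v (hdist (v 1%nat) (v 0%nat)) q ltac:(apply hdist_ge0) ltac:(lra) ltac:(lra)) as [l Hl'].
  { intro k. induction k. simpl. lra. rewrite (Sv (S k)), (Sv k). eapply Rle_trans. apply Plip.
    rewrite <- (Sv k). simpl. pose proof (hdist_ge0 (v (S k)) (v k)). nra. }
  assert (Fix : Phi l = l).
  { apply (lim_unique (fun k => Phi (v k))).
    - intros e He. destruct (Hl' e He) as [N HN]. exists N. intros m Hm. eapply Rle_lt_trans. apply Plip.
      specialize (HN m Hm). pose proof (hdist_ge0 (v m) l). nra.
    - apply (conv_ext (fun k => v (S k))). intro k; apply Sv. apply conv_shift; auto. }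
  exists l. unfold Phi, Sop in Fix.
  rewrite <- hadd_assoc in Fix.
  assert (Fix' : hadd l (hadd (hscal (rC (- t)) (M l)) (hscal (rC t) w)) = hadd l hzero) by (rewrite hadd_0r; exact Fix).
  apply hadd_cancel_l in Fix'. clear Fix. rename Fix' into Fix.
  apply opp_unique in Fix. rewrite hopp_scal, hscal_mul in Fix.
  replace (Cmul (rC (-1)) (rC (- t))) with (rC t) in Fix by (apply Ceq; simpl; ring).
  rewrite <- (scal_inv t w), Fix, scal_inv by lra. reflexivity.
Qed.

Lemma fib_bij {U V W Y : Hilbert} (r : U -> V) (rs : V -> U) (a : V -> W) (as_ : W -> V) (b : W -> Y) :
  bounded_op r -> bounded_op rs -> bounded_op a -> bounded_op as_ -> bounded_op b ->
  is_adjoint r rs -> is_adjoint a as_ ->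
  (forall v, a v = hzero <-> exists u, r u = v) ->
  (forall w, b w = hzero -> exists v, a v = w) -> (forall v, b (a v) = hzero) ->
  exists (Bx : V -> V), (forall v, Bx (hadd (as_ (a v)) (r (rs v))) = v) /\
                      (forall w, hadd (as_ (a (Bx w))) (r (rs (Bx w))) = w).
Proof.
  intros Hr Hrs Ha Has Hb Hadj1 Hadj2 Ex1 Ex2 Ex2b.
  destruct (fib_coercive r rs a b Hr Hrs Ha Hb Hadj1 Ex1 Ex2 Ex2b) as [c [Hc Hco]].
  set (M := fun v => hadd (as_ (a v)) (r (rs v))).
  assert (HMl : linear_op M).
  { split; intros; unfold M.
    - rewrite (lin_add a), (lin_add as_), (lin_add rs), (lin_add r) by (apply (proj1 Ha) || apply (proj1 Hrs) || apply (proj1 Has) || apply (proj1 Hr)).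
      apply G_swap.
    - rewrite (lin_scal a), (lin_scal as_), (lin_scal rs), (lin_scal r) by (apply (proj1 Ha) || apply (proj1 Hrs) || apply (proj1 Has) || apply (proj1 Hr)).
      symmetry; apply hscal_addv. }
  assert (HMb : bounded_op M).
  { split; auto. destruct (bnd_pos a Ha) as [K1 [P1 HK1]]. destruct (bnd_pos as_ Has) as [K2 [P2 HK2]].
    destruct (bnd_pos r Hr) as [K3 [P3 HK3]]. destruct (bnd_pos rs Hrs) as [K4 [P4 HK4]].
    exists (K2 * K1 + K3 * K4). intro v. unfold M. eapply Rle_trans. apply norm_tri.
    pose proof (HK2 (a v)). pose proof (HK1 v). pose proof (HK3 (rs v)). pose proof (HK4 v).
    pose proof (hnorm_ge0 (a v)). pose proof (hnorm_ge0 (rs v)). pose proof (hnorm_ge0 v).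
    assert (K2 * hnorm (a v) <= K2 * (K1 * hnorm v)) by (apply Rmult_le_compat_l; lra).
    assert (K3 * hnorm (rs v) <= K3 * (K4 * hnorm v)) by (apply Rmult_le_compat_l; lra).
    replace ((K2 * K1 + K3 * K4) * hnorm v) with (K2 * (K1 * hnorm v) + K3 * (K4 * hnorm v)) by ring. lra. }
  assert (Hre : forall v, c * Nsq v <= re (hinner (M v) v)).
  { intro v. unfold M. rewrite re_addl. rewrite re_sym, <- Hadj2. rewrite Hadj1. apply Hco. }
  assert (Surj := coercive_surj M HMb c Hc Hre).
  assert (Inj : forall v1 v2, M v1 = M v2 -> v1 = v2).
  { intros v1 v2 E. apply sub_eq0. apply Nsq_eq0.
    assert (Z : M (hadd v1 (hopp v2)) = hzero) by (rewrite lin_sub, E, hadd_oppr by auto; reflexivity).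
    pose proof (Hre (hadd v1 (hopp v2))). rewrite Z, hinner_0l in H. simpl in H.
    pose proof (Nsq_ge0 (hadd v1 (hopp v2))). nra. }
  assert (F : forall w, {v | M v = w}) by (intro w; apply constructive_indefinite_description; apply Surj).
  exists (fun w => proj1_sig (F w)). split.
  - intro v. apply Inj. apply (proj2_sig (F (M v))).
  - intro w. apply (proj2_sig (F w)).
Qed.


Lemma adj_swap {V W : Hilbert} (f : V -> W) (g : W -> V) : is_adjoint f g -> is_adjoint g f.
Proof. intros Hf y x. rewrite hinner_conj, <- Hf, hinner_conj, Cconj_inv. reflexivity. Qed.

Lemma opsub_eq {V W : Hilbert} (f g : V -> W) : opsub f g = opadd f (opscal (rC (-1)) g).
Proof. apply functional_extensionality. intro x. unfold opsub, opadd, opscal. rewrite hopp_scal. reflexivity. Qed.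

Lemma L0_sub (L : GOA) (g0 g1 : G L) (A B : H L g0 -> H L g1) : L0 g0 g1 A -> L0 g0 g1 B -> L0 g0 g1 (opsub A B).
Proof. intros. rewrite opsub_eq. apply L0_add; auto. apply L0_scal; auto. Qed.
Lemma Linf_sub (L : GOA) (g0 g1 : G L) (A B : H L g0 -> H L g1) : Linf g0 g1 A -> Linf g0 g1 B -> Linf g0 g1 (opsub A B).
Proof. intros. rewrite opsub_eq. apply Linf_add; auto. apply Linf_scal; auto. Qed.

Lemma sym_sub (L : GOA) (Cl : Classical L) l (g0 g1 : G L) (A B : H L g0 -> H L g1) : (l < nsym Cl)%nat -> L0 g0 g1 A -> L0 g0 g1 B ->
  symb Cl l (opsub A B) = fun x => opsub (symb Cl l A x) (symb Cl l B x).
Proof. intros Hl HA HB. rewrite opsub_eq, sym_add, sym_scal; auto. 2: apply L0_scal; auto.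
  apply functional_extensionality_dep. intro x. rewrite opsub_eq. reflexivity. Qed.

Lemma L0_lin (L : GOA) (g0 g1 : G L) (A : H L g0 -> H L g1) : L0 g0 g1 A -> linear_op A.
Proof. intro HA. apply (proj1 (L0_bounded L g0 g1 A HA)). Qed.

Lemma G1' {V : Hilbert} (a b : V) : hadd (hadd a b) (hopp b) = a.
Proof. rewrite <- hadd_assoc, hadd_oppr, hadd_0r. reflexivity. Qed.

Lemma stepC (L : GOA) (Cl : Classical L) (HF : ext_fredholm L) (g0 g1 g2 g' : G L)
  (T : H L g0 -> H L g1) (R : H L g' -> H L g0) (Bn : H L g1 -> H L g2)
  (HT : L0 g0 g1 T) (HR : L0 g' g0 R) (HBn : L0 g1 g2 Bn) (TR : forall u, T (R u) = hzero)
  (Hfib : forall l, (l < nsym Cl)%nat -> forall x,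
     (forall v, symb Cl l T x v = hzero <-> exists u, symb Cl l R x u = v) /\
     (forall w, symb Cl l Bn x w = hzero -> exists v, symb Cl l T x v = w) /\
     (forall v, symb Cl l Bn x (symb Cl l T x v) = hzero)) :
  exists C, L0 g1 g0 C /\ forall x, T (C (T x)) = T x.
Proof.
  destruct (L0_adj L _ _ T HT) as [Ts [adjT HTs]].
  destruct (L0_adj L _ _ R HR) as [Rs [adjR HRs]].
  set (D := opadd (opcomp Ts T) (opcomp R Rs)).
  assert (HD : L0 g0 g0 D) by (apply L0_add; apply L0_comp; auto).
  assert (Ell : has_parametrix L g0 g0 D).
  { apply (proj1 (sym_elliptic L Cl g0 g0 D HD)). intros l Hl x.
    unfold D. rewrite sym_add, !sym_mul by (auto; apply L0_comp; auto).
    destruct (Hfib l Hl x) as [F1 [F2 F3]].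
    destruct (fib_bij (symb Cl l R x) (symb Cl l Rs x) (symb Cl l T x) (symb Cl l Ts x) (symb Cl l Bn x))
      as [Bx [B1 B2]]; auto; try (apply sym_morph; auto).
    apply sym_adj; auto. apply sym_adj; auto.
    exists Bx. split; intros; unfold opadd, opcomp; auto. }
  assert (FR : fredholm D) by (apply (proj1 (proj1 HF g0 g0 D HD)); exact Ell).
  assert (SA : selfadjoint D).
  { intros x y. unfold D, opadd, opcomp. rewrite hinner_add, hinner_addr.
    rewrite (adj_swap T Ts adjT), adjT, (adjR (Rs x)), (adj_swap R Rs adjR). reflexivity. }
  destruct (proj2 HF g0 D HD SA FR) as [B [P [HB [HP [E1 E2]]]]].
  assert (E2' : forall x, B (D x) = hadd x (hopp (P x))) by (intro x; exact (f_equal (fun f => f x) E2)).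
  assert (Tl := L0_lin L _ _ T HT). assert (Bl := L0_lin L _ _ B HB). assert (Tsl := L0_lin L _ _ Ts HTs).
  assert (Rl := L0_lin L _ _ R HR). assert (Rsl := L0_lin L _ _ Rs HRs).
  assert (Ker : forall z, D z = hzero -> T z = hzero).
  { intros z Hz. apply Nsq_eq0.
    assert (E : re (hinner (D z) z) = Nsq (T z) + Nsq (Rs z)).
    { unfold D, opadd, opcomp. rewrite re_addl, re_sym, <- adjT, adjR. reflexivity. }
    rewrite Hz, hinner_0l in E. simpl in E. pose proof (Nsq_ge0 (T z)). pose proof (Nsq_ge0 (Rs z)). lra. }
  assert (TP : forall x, T (P x) = hzero) by (intro x; apply Ker, (proj1 (HP x))).
  set (Wop := opcomp T (opcomp B R)).
  assert (HW : L0 g' g1 Wop) by (unfold Wop; apply L0_comp; auto; apply L0_comp; auto).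
  destruct (L0_adj L _ _ Wop HW) as [Ws [adjW HWs]].
  assert (W1 : forall u, Wop (Rs (R u)) = hzero).
  { intro u. assert (DR : D (R u) = R (Rs (R u))).
    { unfold D, opadd, opcomp. rewrite TR, (lin_0 Ts Tsl), hadd_0. reflexivity. }
    unfold Wop, opcomp. rewrite <- DR, E2', lin_sub, TP, TR, hopp_0, hadd_0 by auto. reflexivity. }
  assert (W2 : forall w, R (Ws w) = hzero).
  { intro w. apply Nsq_eq0. unfold Nsq. rewrite adjR, re_sym, <- adjW, W1, hinner_0l. reflexivity. }
  assert (W3 : forall y, Wop (Rs y) = hzero).
  { intro y. apply Nsq_eq0. unfold Nsq. rewrite adjW, re_sym, <- adjR, W2, hinner_0l. reflexivity. }
  exists (opcomp B Ts). split. apply L0_comp; auto.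
  intro x. unfold opcomp.
  replace (Ts (T x)) with (hadd (D x) (hopp (R (Rs x)))) by (unfold D, opadd, opcomp; apply G1').
  rewrite (lin_sub B), (lin_sub T), E2', (lin_sub T), TP by auto.
  change (T (B (R (Rs x)))) with (Wop (Rs x)). rewrite W3, !hopp_0, !hadd_0r. reflexivity.
Qed.


Definition Cch (L : GOA) (g0 g1 : G L) (T : H L g0 -> H L g1) : H L g1 -> H L g0 :=
  epsilon (inhabits (@opzero (H L g1) (H L g0))) (fun C => L0 g1 g0 C /\ forall x, T (C (T x)) = T x).

Fixpoint Atf (L : GOA) (g : nat -> G L) (A : forall j : nat, H L (g j) -> H L (g (S j))) (j : nat)
  : H L (g j) -> H L (g (S j)) :=
  match j return H L (g j) -> H L (g (S j)) with
  | O => A O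
  | S j' => opsub (A (S j')) (opcomp (A (S j')) (opcomp (Atf L g A j') (Cch L (g j') (g (S j')) (Atf L g A j'))))
  end.

Lemma opsub_self {V W : Hilbert} (f : V -> W) : opsub f f = opzero.
Proof. apply functional_extensionality. intro x. unfold opsub, opzero. apply hadd_oppr. Qed.


Close Scope R_scope.

Theorem mainTheorem12 (L : GOA) (Cl : Classical L) (HF : ext_fredholm L)
  (N : nat) (g : nat -> G L) (A : forall j : nat, H L (g j) -> H L (g (S j)))
  (HA : forall j, (j <= N)%nat -> L0 (g j) (g (S j)) (A j))
  (Hex : forall l, (l < nsym Cl)%nat -> forall x : Xbase Cl l,
      exact_seq (fun j => Ebun Cl l (g j) x) (fun j => symb Cl l (A j) x) N) :
  (exists At : forall j : nat, H L (g j) -> H L (g (S j)),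
      (forall j, (j <= N)%nat -> L0 (g j) (g (S j)) (At j) /\
          forall l, (l < nsym Cl)%nat -> symb Cl l (At j) = symb Cl l (A j)) /\
      (forall j, (j < N)%nat -> opcomp (At (S j)) (At j) = opzero)) /\
  ((forall j, (j < N)%nat -> Linf (g j) (g (S (S j))) (opcomp (A (S j)) (A j))) ->
   exists At : forall j : nat, H L (g j) -> H L (g (S j)),
      (forall j, (j <= N)%nat -> L0 (g j) (g (S j)) (At j) /\
          forall l, (l < nsym Cl)%nat -> symb Cl l (At j) = symb Cl l (A j)) /\
      (forall j, (j < N)%nat -> opcomp (At (S j)) (At j) = opzero) /\
      (forall j, (j <= N)%nat -> Linf (g j) (g (S j)) (opsub (At j) (A j)))).
Proof.
  set (Hsm := forall j, (j < N)%nat -> Linf (g j) (g (S (S j))) (opcomp (A (S j)) (A j))).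
  set (At := Atf L g A).
  set (Inv := fun j => L0 (g j) (g (S j)) (At j) /\
     (forall l, (l < nsym Cl)%nat -> symb Cl l (At j) = symb Cl l (A j)) /\
     (Hsm -> Linf (g j) (g (S j)) (opsub (At j) (A j))) /\
     (match j return Prop with O => True | S j' => forall x, At (S j') (At j' x) = hzero end)).
  assert (Mid : forall l, (l < nsym Cl)%nat -> forall x j, (j < N)%nat -> forall v,
     symb Cl l (A (S j)) x v = hzero <-> exists u, symb Cl l (A j) x u = v).
  { intros l Hl x j Hj v. apply (proj1 (proj2 (Hex l Hl x)) j Hj). }
  assert (Comp0 : forall l, (l < nsym Cl)%nat -> forall x j, (j < N)%nat -> forall u,
     symb Cl l (A (S j)) x (symb Cl l (A j) x u) = hzero).
  { intros l Hl x j Hj u. apply (Mid l Hl x j Hj). exists u; reflexivity. }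
  assert (Main : forall j, (j <= N)%nat -> forall i, (i <= j)%nat -> Inv i).
  { induction j as [|j IH]; intros Hj i Hi.
    - assert (i = 0%nat) by lia. subst i. split; [|split; [|split]].
      + apply HA; lia.
      + reflexivity.
      + intros _. change (Linf (g 0%nat) (g 1%nat) (opsub (A 0%nat) (A 0%nat))). rewrite opsub_self. apply Linf_zero.
      + exact I.
    - destruct (Nat.eq_dec i (S j)) as [->|Hne]; [|apply IH; lia].
      assert (IHj : Inv j) by (apply IH; lia).
      destruct IHj as [HTj [STj [LTj _]]].
      assert (HA' : L0 (g (S j)) (g (S (S j))) (A (S j))) by (apply HA; lia).
      assert (ExC : exists C, L0 (g (S j)) (g j) C /\ forall x, (At j) (C ((At j) x)) = (At j) x).
      { destruct j as [|j'].
        - apply (stepC L Cl HF (g 0%nat) (g 1%nat) (g 2%nat) (g 0%nat) (At 0%nat) opzero (A 1%nat) HTj (L0_zero L _ _) HA').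
          + intro u. apply (lin_0 (At 0%nat) (L0_lin L _ _ (At 0%nat) HTj)).
          + intros l Hl x. rewrite (STj l Hl). rewrite (sym_smooth L Cl l _ _ opzero Hl (Linf_zero L _ _)).
            split; [|split].
            * intro v. split.
              -- intro Hv. exists hzero. unfold opzero. symmetry. apply (proj1 (Hex l Hl x)).
                 rewrite Hv. symmetry. apply lin_0. apply (proj1 (sym_morph L Cl l _ _ (A 0%nat) Hl (HA 0%nat ltac:(lia)) x)).
              -- intros [u <-]. unfold opzero. apply lin_0. apply (proj1 (sym_morph L Cl l _ _ (A 0%nat) Hl (HA 0%nat ltac:(lia)) x)).
            * intros w Hw. apply (proj1 (Mid l Hl x 0%nat ltac:(lia) w) Hw).
            * intro v. apply (Comp0 l Hl x 0%nat ltac:(lia)).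
        - destruct (IH ltac:(lia) j' ltac:(lia)) as [HR [SR _]].
          destruct (IH ltac:(lia) (S j') ltac:(lia)) as [_ [_ [_ TR]]].
          apply (stepC L Cl HF (g (S j')) (g (S (S j'))) (g (S (S (S j')))) (g j') (At (S j')) (At j') (A (S (S j'))) HTj HR HA').
          + exact TR.
          + intros l Hl x. rewrite (STj l Hl), (SR l Hl). split; [|split].
            * intro v. apply (Mid l Hl x j' ltac:(lia)).
            * intros w Hw. apply (proj1 (Mid l Hl x (S j') ltac:(lia) w) Hw).
            * intro v. apply (Comp0 l Hl x (S j') ltac:(lia)). }
      pose proof (epsilon_spec (inhabits (@opzero (H L (g (S j))) (H L (g j))))
                   (fun C => L0 (g (S j)) (g j) C /\ forall x, (At j) (C ((At j) x)) = (At j) x) ExC) as [HC SC].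
      change (L0 (g (S j)) (g j) (Cch L (g j) (g (S j)) (At j))) in HC.
      change (forall x, At j (Cch L (g j) (g (S j)) (At j) (At j x)) = At j x) in SC.
      assert (EAt : At (S j) = opsub (A (S j)) (opcomp (A (S j)) (opcomp (At j) (Cch L (g j) (g (S j)) (At j))))) by reflexivity.
      generalize dependent (Cch L (g j) (g (S j)) (At j)). intros C HC SC EAt.
      split; [|split; [|split]].
      + rewrite EAt. apply L0_sub. exact HA'. apply L0_comp. apply L0_comp. exact HC. exact HTj. exact HA'.
      + intros l Hl. rewrite EAt.
        assert (H1 : L0 (g (S j)) (g (S j)) (opcomp (At j) C)) by (apply L0_comp; [exact HC|exact HTj]).
        rewrite (sym_sub L Cl l _ _ _ _ Hl HA' (L0_comp L _ _ _ _ _ H1 HA')).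
        rewrite (sym_mul L Cl l _ _ _ _ _ Hl H1 HA'), (sym_mul L Cl l _ _ _ _ _ Hl HC HTj).
        rewrite (STj l Hl). apply functional_extensionality_dep. intro x.
        apply functional_extensionality. intro v. unfold opsub, opcomp.
        rewrite (Comp0 l Hl x j ltac:(lia)), hopp_0, hadd_0r. reflexivity.
      + intro Hs. rewrite EAt.
        replace (opsub (opsub (A (S j)) (opcomp (A (S j)) (opcomp (At j) C))) (A (S j))) with (opscal (rC (-1)) (opcomp (opcomp (A (S j)) (At j)) C)).
        2: { apply functional_extensionality. intro v. unfold opsub, opscal, opcomp.
             rewrite <- hopp_scal. symmetry. apply G1. }
        apply Linf_scal. apply Linf_comp_r; auto.
        replace (opcomp (A (S j)) (At j)) with (opadd (opcomp (A (S j)) (A j)) (opcomp (A (S j)) (opsub (At j) (A j)))).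
        2: { apply functional_extensionality. intro v. unfold opadd, opcomp, opsub.
             rewrite <- (lin_add (A (S j)) _ _ (L0_lin L _ _ (A (S j)) HA')). f_equal. apply hadd_addsub. }
        apply Linf_add. apply Hs; lia. apply Linf_comp_l; auto.
      + intro x. change (At (S j) ((At j) x) = hzero). rewrite EAt. unfold opsub, opcomp. rewrite SC. apply hadd_oppr. }
  split.
  - exists At. split.
    + intros j Hj. destruct (Main j Hj j (le_n _)) as [A1 [A2 _]]. auto.
    + intros j Hj. destruct (Main (S j) Hj (S j) (le_n _)) as [_ [_ [_ A4]]].
      apply functional_extensionality. intro x. apply A4.
  - intro Hs. exists At. split; [|split].
    + intros j Hj. destruct (Main j Hj j (le_n _)) as [A1 [A2 _]]. auto.
    + intros j Hj. destruct (Main (S j) Hj (S j) (le_n _)) as [_ [_ [_ A4]]].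
      apply functional_extensionality. intro x. apply A4.
    + intros j Hj. destruct (Main j Hj j (le_n _)) as [_ [_ [A3 _]]]. auto.
Qed.
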